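(* The edge generating series of the Dyck lattices is $$\sum_{n\ge0}\ell(\mathcal{D}_n)x^n=\frac{1-3x-(1-x)\sqrt{1-4x}}{2x\sqrt{1-4x}}.$$ Moreover, for every $n\ge2$, $$\ell(\mathcal{D}_n)=\frac12\binom{2n}{n}\frac{n-1}{n+1}=\binom{2n-1}{n-2},$$ and for every $n\ge1$ the Hasse index is $i(\mathcal{D}_n)=(n-1)/2$; in particular $i(\mathcal{D}_n)\sim n/2$.
   Context: Steps: $U=(1,1)$, $D=(1,-1)$. $\mathcal{D}_n$ is the set of Dyck paths of semi-length $n$ (lattice paths from $(0,0)$ to $(2n,0)$ with steps $U,D$ never going below the $x$-axis), partially ordered by $\gamma_1\le\gamma_2$ iff $\gamma_1$ lies weakly below $\gamma_2$. For a finite poset $P$, $\ell(P)$ is the number of edges of its Hasse diagram (i.e. the number of covering pairs), and the Hasse index is $i(P)=\ell(P)/|P|$. $a_n\sim b_n$ means $a_n/b_n\to1$. *)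

(* Defs.v *)
(* Dyck paths as lists of steps (true = U, false = D),
   the Dyck lattice as an explicitly enumerated finite poset, and reals
   (Stdlib Reals) for the generating function / Hasse index / asymptotics. *)
From Stdlib Require Import Reals List Arith Bool.
Import ListNotations.

Fixpoint all_words (k : nat) : list (list bool) :=
  match k with
  | 0 => [ [] ]
  | S k' => map (cons true) (all_words k') ++ map (cons false) (all_words k')
  end.

Fixpoint is_dyck_from (h : nat) (p : list bool) : bool :=
  match p with
  | [] => Nat.eqb h 0
  | true :: p' => is_dyck_from (S h) p'
  | false :: p' => Nat.ltb 0 h && is_dyck_from (h - 1) p'
  end.

Definition is_dyck (p : list bool) : bool := is_dyck_from 0 p.

Definition dyck (n : nat) : list (list bool) := filter is_dyck (all_words (2 * n)).

(* heights at abscissae 0, 1, ..., length p (no truncation occurs on Dyck paths) *)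
Fixpoint heights_from (h : nat) (p : list bool) : list nat :=
  h :: match p with
       | [] => []
       | b :: p' => heights_from (if b then S h else h - 1) p'
       end.

Definition heights (p : list bool) : list nat := heights_from 0 p.

Definition path_le (p q : list bool) : bool :=
  Nat.eqb (length p) (length q) &&
  forallb (fun ab => Nat.leb (fst ab) (snd ab)) (combine (heights p) (heights q)).

Definition path_eqb (p q : list bool) : bool :=
  if list_eq_dec bool_dec p q then true else false.

(* Generic finite poset given by an enumeration P and an order le. *)
Definition lt_in {A} (eqb le : A -> A -> bool) (x y : A) : bool :=
  le x y && negb (eqb x y).

Definition covers_in {A} (P : list A) (eqb le : A -> A -> bool) (x y : A) : bool :=
  lt_in eqb le x y &&
  negb (existsb (fun z => lt_in eqb le x z && lt_in eqb le z y) P).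

Definition hasse_edges {A} (P : list A) (eqb le : A -> A -> bool) : nat :=
  length (filter (fun xy => covers_in P eqb le (fst xy) (snd xy)) (list_prod P P)).

Definition ell_dyck (n : nat) : nat := hasse_edges (dyck n) path_eqb path_le.

Definition hasse_index_dyck (n : nat) : R :=
  (INR (ell_dyck n) / INR (length (dyck n)))%R.

(* Main.v *)
Require Import Defs.
From Stdlib Require Import Reals.
From Stdlib Require Import List Arith Bool Lia.
Import ListNotations.

Definition step (h : nat) (b : bool) : nat := if b then S h else h - 1.

Fixpoint LE (h1 : nat) (x : list bool) (h2 : nat) (y : list bool) : bool :=
  match x, y with
  | [], [] => Nat.leb h1 h2
  | a :: r, b :: s => Nat.leb h1 h2 && LE (step h1 a) r (step h2 b) s
  | _, _ => false
  end.

Fixpoint flips (w : list bool) : list (list bool) :=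
  match w with
  | [] => []
  | x :: r => (match x, r with false, true :: r' => [true :: false :: r'] | _, _ => [] end)
              ++ map (cons x) (flips r)
  end.

Fixpoint vcount (w : list bool) : nat :=
  match w with
  | [] => 0
  | x :: r => (match x, r with false, true :: _ => 1 | _, _ => 0 end) + vcount r
  end.

Lemma forallb_LE : forall p q h1 h2, length p = length q ->
  forallb (fun ab => Nat.leb (fst ab) (snd ab)) (combine (heights_from h1 p) (heights_from h2 q))
  = LE h1 p h2 q.
Proof.
  induction p as [|a p IH]; intros [|b q] h1 h2 Hl; simpl in *; try discriminate.
  - now rewrite andb_true_r.
  - f_equal. apply IH. lia.
Qed.

Lemma path_le_LE : forall p q, path_le p q = true <-> length p = length q /\ LE 0 p 0 q = true.
Proof.
  intros p q. unfold path_le, heights. split.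
  - intros H. apply andb_true_iff in H as [H1 H2]. apply Nat.eqb_eq in H1.
    split; auto. now rewrite <- forallb_LE.
  - intros [H1 H2]. apply andb_true_iff; split. now apply Nat.eqb_eq.
    now rewrite forallb_LE.
Qed.

Lemma LE_refl : forall x h, LE h x h x = true.
Proof. induction x; intros h; simpl. apply Nat.leb_refl. rewrite Nat.leb_refl, IHx. auto. Qed.

Lemma step_inj : forall h a b, step h a = step h b -> a = b.
Proof. intros h [] []; simpl; auto; lia. Qed.

Lemma LE_head : forall x y h1 h2, LE h1 x h2 y = true -> h1 <= h2.
Proof.
  intros [|a x] [|b y] h1 h2 H; simpl in H; try discriminate.
  now apply Nat.leb_le. apply andb_true_iff in H as [H _]. now apply Nat.leb_le.
Qed.

Lemma LE_antisym : forall x y h, LE h x h y = true -> LE h y h x = true -> x = y.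
Proof.
  induction x as [|a x IH]; intros [|b y] h H1 H2; simpl in *; try discriminate; auto.
  apply andb_true_iff in H1 as [_ H1]. apply andb_true_iff in H2 as [_ H2].
  assert (Hab : a = b).
  { destruct x as [|c x], y as [|d y]; simpl in *; try discriminate.
    - apply Nat.leb_le in H1. apply Nat.leb_le in H2. apply (step_inj h). lia.
    - apply andb_true_iff in H1 as [H1 _]. apply andb_true_iff in H2 as [H2 _].
      apply Nat.leb_le in H1. apply Nat.leb_le in H2. apply (step_inj h). lia. }
  subst b. f_equal. eapply IH; eauto.
Qed.

Lemma LE_length : forall x y h1 h2, LE h1 x h2 y = true -> length x = length y.
Proof.
  induction x; intros [|b y] h1 h2 H; simpl in *; try discriminate; auto.
  apply andb_true_iff in H as [_ H]. f_equal; eauto.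
Qed.

Lemma flips_ok : forall x h, is_dyck_from h x = true -> forall y, In y (flips x) ->
  is_dyck_from h y = true /\ LE h x h y = true /\ y <> x.
Proof.
  induction x as [|a r IH]; intros h Hd y Hy; simpl in Hy. contradiction.
  apply in_app_or in Hy as [Hy|Hy].
  - destruct a; [contradiction|]. destruct r as [|[] r']; try contradiction.
    destruct Hy as [<-|[]]. simpl in Hd |- *.
    apply andb_true_iff in Hd as [Hh Hd]. apply Nat.ltb_lt in Hh.
    replace (S (h - 1)) with h in * by lia. replace (h - 0) with h by lia.
    rewrite Hd, Nat.leb_refl. simpl.
    assert (Hx : (h - 1 <=? S h) = true) by (apply Nat.leb_le; lia).
    rewrite Hx, LE_refl.
    repeat split; auto. discriminate.
  - apply in_map_iff in Hy as [y' [<- Hy']].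
    destruct a; simpl in Hd |- *.
    + destruct (IH _ Hd _ Hy') as [A [B D]]. rewrite A, B, Nat.leb_refl.
      repeat split; auto. congruence.
    + apply andb_true_iff in Hd as [Hh Hd].
      destruct (IH _ Hd _ Hy') as [A [B D]]. rewrite A, B, Nat.leb_refl, Hh.
      repeat split; auto. congruence.
Qed.

Lemma flips_len : forall x y, In y (flips x) -> length y = length x.
Proof.
  induction x as [|a r IH]; intros y Hy; simpl in Hy. contradiction.
  apply in_app_or in Hy as [Hy|Hy].
  - destruct a; [contradiction|]. destruct r as [|[] r']; try contradiction.
    destruct Hy as [<-|[]]. reflexivity.
  - apply in_map_iff in Hy as [y' [<- Hy']]. simpl. f_equal. auto.
Qed.

Lemma flips_between : forall x h, is_dyck_from h x = true -> forall y, In y (flips x) ->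
  forall z, is_dyck_from h z = true -> LE h x h z = true -> LE h z h y = true -> z = x \/ z = y.
Proof.
  induction x as [|a r IH]; intros h Hd y Hy z Hz H1 H2; simpl in Hy. contradiction.
  apply in_app_or in Hy as [Hy|Hy].
  - destruct a; [contradiction|]. destruct r as [|[] r']; try contradiction.
    destruct Hy as [<-|[]].
    destruct z as [|c [|d t]]; simpl in H1; try discriminate.
    + destruct c; simpl in H1; rewrite andb_false_r in H1; discriminate.
    + simpl in H1, H2, Hd, Hz.
      apply andb_true_iff in Hd as [Hh _]. apply Nat.ltb_lt in Hh.
      apply andb_true_iff in H1 as [_ H1]. apply andb_true_iff in H1 as [_ H1].
      apply andb_true_iff in H2 as [_ H2]. apply andb_true_iff in H2 as [_ H2].
      replace (S (h - 1)) with h in * by lia. replace (h - 0) with h in * by lia.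
      destruct c, d; simpl in H1, H2, Hz.
      * apply LE_head in H2. lia.
      * replace (h - 0) with h in * by lia.
        right. f_equal. f_equal. apply LE_antisym with h; auto.
      * replace (S (h - 1)) with h in * by lia.
        left. f_equal. f_equal. apply LE_antisym with h; auto.
      * apply andb_true_iff in Hz as [_ Hz]. apply andb_true_iff in Hz as [Hz2 _].
        apply Nat.ltb_lt in Hz2. apply LE_head in H1. lia.
  - apply in_map_iff in Hy as [y' [<- Hy']].
    destruct z as [|c t]; simpl in H1; try discriminate.
    simpl in H2. apply andb_true_iff in H1 as [_ H1]. apply andb_true_iff in H2 as [_ H2].
    assert (Hca : c = a).
    { pose proof (flips_len _ _ Hy') as Hl.
      destruct r as [|e r], y' as [|f y'], t as [|g t]; simpl in *; try discriminate;
      try (apply Nat.leb_le in H1; apply Nat.leb_le in H2; apply (step_inj h); lia).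
      apply andb_true_iff in H1 as [H1 _]. apply andb_true_iff in H2 as [H2 _].
      apply Nat.leb_le in H1; apply Nat.leb_le in H2; apply (step_inj h); lia. }
    subst c.
    assert (Hd' : is_dyck_from (step h a) r = true /\ is_dyck_from (step h a) t = true).
    { destruct a; simpl in Hd, Hz; auto.
      apply andb_true_iff in Hd as [_ Hd]. apply andb_true_iff in Hz as [_ Hz]. auto. }
    destruct Hd' as [Hd' Hz'].
    destruct (IH _ Hd' _ Hy' _ Hz' H1 H2) as [->| ->]; auto.
Qed.

Lemma dyck_tail : forall h c s, is_dyck_from h (c :: s) = true -> is_dyck_from (step h c) s = true.
Proof. intros h [] s H; simpl in *; auto. apply andb_true_iff in H as [_ H]; auto. Qed.

Lemma dyck_pos : forall h s, is_dyck_from h (false :: s) = true -> 0 < h.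
Proof. intros h s H. simpl in H. apply andb_true_iff in H as [H _]. now apply Nat.ltb_lt. Qed.

Lemma step_ge : forall h d, h - 1 <= step h d.
Proof. intros h []; simpl; lia. Qed.

Lemma phase2 : forall r y hx hy, is_dyck_from hx (false :: r) = true -> is_dyck_from hy y = true ->
  LE hx (false :: r) hy y = true -> (forall c s, y = c :: s -> hx - 1 + 2 <= step hy c) ->
  exists f, In f (flips (false :: r)) /\ LE hx f hy y = true.
Proof.
  induction r as [|b r IH]; intros y hx hy Hx Hy Hle Hgap;
  destruct y as [|c s]; try (simpl in Hle; discriminate);
  specialize (Hgap c s eq_refl); pose proof (dyck_pos _ _ Hx) as Hpos.
  - destruct s; [|simpl in Hle; rewrite andb_false_r in Hle; discriminate].
    apply dyck_tail in Hy. simpl in Hy. apply Nat.eqb_eq in Hy. lia.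
  - destruct s as [|d s'].
    { simpl in Hle. destruct b; simpl in Hle; rewrite !andb_false_r in Hle; discriminate. }
    destruct b.
    + exists (true :: false :: r). split. simpl. auto.
      cbn [LE step] in Hle |- *.
      apply andb_true_iff in Hle as [H0 Hle]. apply andb_true_iff in Hle as [_ Hle].
      replace (S (hx - 1)) with hx in Hle by lia. replace (S hx - 1) with hx by lia.
      rewrite H0, Hle. assert (Hs : (S hx <=? step hy c) = true) by (apply Nat.leb_le; lia).
      rewrite Hs. reflexivity.
    + assert (Hx' : is_dyck_from (hx - 1) (false :: r) = true) by (apply (dyck_tail _ false) in Hx; exact Hx).
      pose proof (dyck_pos _ _ Hx') as Hpos2.
      simpl in Hle. apply andb_true_iff in Hle as [H0 Hle].
      destruct (IH (d :: s') (hx - 1) (step hy c) Hx' (dyck_tail _ _ _ Hy) Hle) as [f' [Hf1 Hf2]].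
      { intros c' s'' E. injection E as <- <-. pose proof (step_ge (step hy c) d). lia. }
      exists (false :: f'). split.
      * simpl. apply in_map. exact Hf1.
      * simpl. rewrite H0. exact Hf2.
Qed.

Lemma phase1 : forall x y h, is_dyck_from h x = true -> is_dyck_from h y = true ->
  LE h x h y = true -> x <> y -> exists f, In f (flips x) /\ LE h f h y = true.
Proof.
  induction x as [|a r IH]; intros y h Hx Hy Hle Hne; destruct y as [|c s];
    try (simpl in Hle; discriminate); try congruence.
  destruct (bool_dec a c) as [<-|Hac].
  - assert (Hrs : r <> s) by congruence.
    simpl in Hle. apply andb_true_iff in Hle as [H0 Hle].
    destruct (IH s (step h a) (dyck_tail _ _ _ Hx) (dyck_tail _ _ _ Hy) Hle Hrs) as [f' [Hf1 Hf2]].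
    exists (a :: f'). split.
    + simpl. apply in_or_app. right. now apply in_map.
    + simpl. now rewrite H0, Hf2.
  - destruct a, c; try congruence.
    + simpl in Hle. apply andb_true_iff in Hle as [_ Hle]. apply LE_head in Hle. lia.
    + pose proof (dyck_pos _ _ Hx).
      apply (phase2 r (true :: s) h h Hx Hy Hle).
      intros c' s' E. injection E as <- <-. simpl. lia.
Qed.

Lemma all_words_in : forall k w, In w (all_words k) <-> length w = k.
Proof.
  induction k as [|k IH]; intros w; simpl.
  - split. intros [<-|[]]; auto. destruct w; simpl; try discriminate; auto.
  - rewrite in_app_iff, !in_map_iff. split.
    + intros [[w' [<- H]]|[w' [<- H]]]; simpl; f_equal; apply IH; auto.
    + destruct w as [|[] w']; simpl; intros H; try discriminate; injection H as H.
      left; exists w'; split; auto; apply IH; auto.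
      right; exists w'; split; auto; apply IH; auto.
Qed.

Lemma NoDup_map_cons : forall (b : bool) l, NoDup l -> NoDup (map (cons b) l).
Proof.
  intros b l H. apply NoDup_map_NoDup_ForallPairs; auto.
  intros x y _ _ E. injection E; auto.
Qed.

Lemma all_words_NoDup : forall k, NoDup (all_words k).
Proof.
  induction k; simpl. constructor. auto. constructor.
  apply NoDup_app; try apply NoDup_map_cons; auto.
  intros a H1 H2. apply in_map_iff in H1 as [? [<- _]]. apply in_map_iff in H2 as [? [E _]].
  discriminate.
Qed.

Lemma dyck_in : forall n w, In w (dyck n) <-> length w = 2 * n /\ is_dyck_from 0 w = true.
Proof.
  intros n w. unfold dyck. rewrite filter_In, all_words_in. reflexivity.
Qed.

Lemma dyck_NoDup : forall n, NoDup (dyck n).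
Proof. intros n. apply NoDup_filter, all_words_NoDup. Qed.

Lemma path_eqb_true : forall p q, path_eqb p q = true <-> p = q.
Proof. intros p q. unfold path_eqb. destruct list_eq_dec; split; congruence. Qed.

Lemma covers_iff : forall n x y, In x (dyck n) -> In y (dyck n) ->
  (covers_in (dyck n) path_eqb path_le x y = true <-> In y (flips x)).
Proof.
  intros n x y Hx Hy. pose proof Hx as [Hxl Hxd]%dyck_in. pose proof Hy as [Hyl Hyd]%dyck_in.
  unfold covers_in, lt_in. split.
  - intros H. apply andb_true_iff in H as [H1 H2]. apply andb_true_iff in H1 as [H1 H3].
    apply path_le_LE in H1 as [_ H1].
    assert (Hne : x <> y). { intros E. apply path_eqb_true in E. rewrite E in H3. discriminate. }
    destruct (phase1 x y 0 Hxd Hyd H1 Hne) as [f [Hf1 Hf2]].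
    destruct (list_eq_dec bool_dec f y) as [<-|Hfy]; auto.
    exfalso. destruct (flips_ok x 0 Hxd f Hf1) as [Fd [Fle Fne]].
    assert (Hfl : length f = length x) by (apply flips_len; auto).
    assert (Hf : In f (dyck n)) by (apply dyck_in; split; congruence).
    rewrite negb_true_iff in H2. match type of H2 with ?e = false => enough (e = true) by congruence end. apply existsb_exists.
    exists f. split; auto. apply andb_true_iff; split; apply andb_true_iff; split.
    + apply path_le_LE. split; congruence.
    + apply negb_true_iff. destruct (path_eqb x f) eqn:E; auto. apply path_eqb_true in E. congruence.
    + apply path_le_LE. split; [congruence|auto].
    + apply negb_true_iff. destruct (path_eqb f y) eqn:E; auto. apply path_eqb_true in E. congruence.
  - intros Hf. destruct (flips_ok x 0 Hxd y Hf) as [Fd [Fle Fne]].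
    apply andb_true_iff; split; [apply andb_true_iff; split|].
    + apply path_le_LE. split; [congruence|auto].
    + apply negb_true_iff. destruct (path_eqb x y) eqn:E; auto. apply path_eqb_true in E. congruence.
    + apply negb_true_iff. destruct (existsb _ _) eqn:E; auto. exfalso.
      apply existsb_exists in E as [z [Hz E]].
      apply andb_true_iff in E as [E1 E2]. apply andb_true_iff in E1 as [E1 E3].
      apply andb_true_iff in E2 as [E2 E4].
      apply path_le_LE in E1 as [_ E1]. apply path_le_LE in E2 as [_ E2].
      apply dyck_in in Hz as [_ Hzd].
      destruct (flips_between x 0 Hxd y Hf z Hzd E1 E2) as [->| ->].
      * rewrite (proj2 (path_eqb_true x x) eq_refl) in E3. discriminate.
      * rewrite (proj2 (path_eqb_true y y) eq_refl) in E4. discriminate.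
Qed.

Lemma flips_NoDup : forall x, NoDup (flips x).
Proof.
  induction x as [|a r IH]; simpl. constructor.
  destruct a; [|destruct r as [|[] r']]; simpl; try (apply NoDup_map_cons; exact IH).
  constructor. constructor. intros H. apply in_map_iff in H as [? [E _]]. discriminate.
  apply NoDup_map_cons; exact IH.
Qed.

Lemma flips_length : forall x, length (flips x) = vcount x.
Proof.
  induction x as [|a r IH]; simpl; auto.
  rewrite length_app, length_map, IH.
  destruct a; [|destruct r as [|[] r']]; reflexivity.
Qed.

Lemma hasse_sum : forall {A} (P : list A) (c : A -> A -> bool),
  length (filter (fun xy => c (fst xy) (snd xy)) (list_prod P P)) =
  list_sum (map (fun x => length (filter (c x) P)) P).
Proof.
  intros A P c. assert (G : forall Q, length (filter (fun xy => c (fst xy) (snd xy)) (list_prod Q P)) =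
  list_sum (map (fun x => length (filter (c x) P)) Q)); [|apply G].
  intros Q. induction Q as [|a Q IH]; simpl; auto.
  rewrite filter_app, length_app, IH. f_equal.
  rewrite filter_map_swap, length_map. reflexivity.
Qed.

Lemma ell_vcount : forall n, ell_dyck n = list_sum (map vcount (dyck n)).
Proof.
  intros n. unfold ell_dyck, hasse_edges. rewrite hasse_sum. f_equal.
  apply map_ext_in. intros x Hx. rewrite <- flips_length.
  apply Nat.le_antisymm; apply NoDup_incl_length.
  - apply NoDup_filter, dyck_NoDup.
  - intros y Hy. apply filter_In in Hy as [Hy H]. apply (covers_iff n x y Hx Hy). auto.
  - apply flips_NoDup.
  - intros y Hy. apply filter_In. pose proof Hx as [Hxl Hxd]%dyck_in.
    destruct (flips_ok x 0 Hxd y Hy) as [Fd _].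
    assert (Hy' : In y (dyck n)) by (apply dyck_in; split; auto; rewrite flips_len with x y; auto).
    split; auto. apply (covers_iff n x y Hx Hy'); auto.
Qed.

Definition NN (h m : nat) : nat := length (filter (is_dyck_from h) (all_words m)).

Fixpoint pk (u : bool) (w : list bool) : nat :=
  match w with [] => 0 | x :: r => (if u && negb x then 1 else 0) + pk x r end.
Fixpoint vl (b : bool) (w : list bool) : nat :=
  match w with [] => 0 | x :: r => (if b && x then 1 else 0) + vl (negb x) r end.

Definition P (h m : nat) (u : bool) : nat := list_sum (map (pk u) (filter (is_dyck_from h) (all_words m))).

Lemma last_def : forall (r : list bool) y u v, last (y :: r) u = last (y :: r) v.
Proof. induction r; intros; simpl; auto. apply IHr. Qed.

Lemma last_cons : forall (x : bool) r u, last (x :: r) u = last r x.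
Proof. intros x [|y r] u. reflexivity. change (last (y :: r) u = last (y :: r) x). apply last_def. Qed.

Lemma pk_vl : forall w u, pk u w + Nat.b2n (last w u) = vl (negb u) w + Nat.b2n u.
Proof.
  induction w as [|x r IH]; intros u. simpl; auto.
  rewrite last_cons. cbn [pk vl]. specialize (IH x). destruct u, x; simpl in *; lia.
Qed.

Lemma vl_vcount : forall w b, vl b w = (if b && hd false w then 1 else 0) + vcount w.
Proof.
  induction w as [|x r IH]; intros b. destruct b; simpl; auto.
  cbn [vl vcount]. rewrite IH. destruct b, x; simpl; destruct r as [|[] r']; simpl; lia.
Qed.

Lemma dyck_last : forall w h d, is_dyck_from h w = true -> (d = false \/ w <> []) -> last w d = false.
Proof.
  induction w as [|x r IH]; intros h d Hd Hc.
  - simpl. destruct Hc; auto. congruence.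
  - destruct r as [|y r'].
    + simpl. destruct x; auto; simpl in Hd; try discriminate.
    + rewrite last_cons. apply (IH (step h x)). now apply dyck_tail. right; discriminate.
Qed.

Lemma pk_dyck : forall w, w <> [] -> is_dyck_from 0 w = true -> pk false w = 1 + vcount w.
Proof.
  intros w Hne Hd. pose proof (pk_vl w false) as E.
  rewrite (dyck_last w 0 false Hd (or_introl eq_refl)) in E. simpl in E.
  rewrite vl_vcount in E. destruct w as [|[] r]; try congruence.
  cbn [andb hd] in E. lia. simpl in Hd. discriminate.
Qed.

Lemma lsum_app : forall l1 l2, list_sum (l1 ++ l2) = list_sum l1 + list_sum l2.
Proof. induction l1; intros; simpl; auto. rewrite IHl1. lia. Qed.

Lemma NN_0 : forall h, NN h 0 = if Nat.eqb h 0 then 1 else 0.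
Proof. intros h. unfold NN. simpl. destruct (h =? 0); reflexivity. Qed.

Lemma NN_S : forall h m, NN h (S m) = NN (S h) m + (match h with 0 => 0 | S h' => NN h' m end).
Proof.
  intros h m. unfold NN. simpl. rewrite filter_app, length_app, !filter_map_swap, !length_map.
  f_equal. destruct h as [|h']; simpl.
  - clear. induction (all_words m); simpl; auto.
  - f_equal. apply filter_ext. intros a. rewrite Nat.sub_0_r. reflexivity.
Qed.

Lemma P_0 : forall h u, P h 0 u = 0.
Proof. intros h u. unfold P. simpl. destruct (h =? 0); reflexivity. Qed.

Lemma lsum_map_plus : forall {A} (f g : A -> nat) l,
  list_sum (map (fun x => f x + g x) l) = list_sum (map f l) + list_sum (map g l).
Proof. induction l; simpl; auto. rewrite IHl. lia. Qed.

Lemma lsum_map_const : forall {A} k (l : list A), list_sum (map (fun _ => k) l) = k * length l.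
Proof. induction l; simpl; auto. rewrite IHl. lia. Qed.

Lemma P_S : forall h m u, P h (S m) u =
  P (S h) m true + (match h with 0 => 0 | S h' => (if u then NN h' m else 0) + P h' m false end).
Proof.
  intros h m u. unfold P, NN. simpl. rewrite filter_app, map_app, lsum_app, !filter_map_swap, !map_map.
  f_equal.
  - rewrite (map_ext _ (pk true)) by (intros; simpl; rewrite andb_false_r; reflexivity). reflexivity.
  - destruct h as [|h'].
    + clear. induction (all_words m) as [|a l IHl]; simpl; auto.
    + rewrite (map_ext _ (fun x => (if u then 1 else 0) + pk false x))
        by (intros; simpl; destruct u; reflexivity).
      rewrite lsum_map_plus, lsum_map_const.
      rewrite (filter_ext (fun a => is_dyck_from (S h') (false :: a)) (is_dyck_from h'))
        by (intros; simpl; rewrite Nat.sub_0_r; reflexivity).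
      destruct u; lia.
Qed.

Lemma P_true : forall h m, P h m true = P h m false +
  (match m with 0 => 0 | S m' => match h with 0 => 0 | S h' => NN h' m' end end).
Proof.
  intros h [|m]. rewrite !P_0. auto.
  rewrite !P_S. destruct h; lia.
Qed.

Lemma P_false : forall m h, P h m false = (m - 1) * NN h (m - 2).
Proof.
  induction m as [|m IH]; intros h. rewrite P_0. auto.
  destruct m as [|m]. { rewrite P_S. destruct h; rewrite !P_0; simpl; lia. }
  rewrite P_S, P_true. destruct m as [|k].
  - destruct h; rewrite !IH; simpl; lia.
  - destruct h; rewrite !IH; simpl; rewrite ?Nat.sub_0_r, ?(NN_S _ k); simpl; nia.
Qed.

Lemma NN_zero : forall m h, m < h -> NN h m = 0.
Proof.
  induction m as [|m IH]; intros h H. rewrite NN_0. destruct h; simpl; lia.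
  rewrite NN_S, IH by lia. destruct h. lia. rewrite IH by lia. auto.
Qed.

Lemma ell_formula : forall n, 1 <= n -> ell_dyck n + NN 0 (2 * n) = (2 * n - 1) * NN 0 (2 * n - 2).
Proof.
  intros n Hn. rewrite <- P_false. rewrite ell_vcount.
  unfold P, NN. change (filter (is_dyck_from 0) (all_words (2*n))) with (dyck n).
  assert (G : forall l, (forall w, In w l -> w <> [] /\ is_dyck_from 0 w = true) ->
    list_sum (map vcount l) + length l = list_sum (map (pk false) l)).
  { induction l as [|w l IHl]; intros Hl; simpl; auto.
    destruct (Hl w (or_introl eq_refl)) as [A B]. rewrite pk_dyck by auto.
    assert (IH2 := IHl (fun w0 H => Hl w0 (or_intror H))). lia. }
  apply G. intros w Hw. apply dyck_in in Hw as [Hl Hd]. split; auto.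
  intros ->. simpl in Hl. lia.
Qed.
From Stdlib Require Import Reals Lra.
Open Scope R_scope.

Lemma C_n_0 : forall n, C n 0 = 1.
Proof. intros n. unfold C. rewrite Nat.sub_0_r. simpl fact. rewrite Rmult_1_l. field. apply INR_fact_neq_0. Qed.

Lemma Nballot : forall m h u, m = (h + 2 * u)%nat ->
  INR (NN h m) + (match u with 0%nat => 0 | S u' => C m u' end) = C m u.
Proof.
  induction m as [|m IH]; intros h u Hm.
  - assert (h = 0%nat /\ u = 0%nat) as [-> ->] by lia. rewrite NN_0. simpl. rewrite C_n_0. lra.
  - destruct h as [|h'].
    + destruct u as [|u]; [lia|]. rewrite NN_S. simpl (match 0%nat with 0%nat => 0%nat | S h' => NN h' m end).
      rewrite Nat.add_0_r.
      assert (Hm' : m = (1 + 2 * u)%nat) by lia.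
      specialize (IH 1%nat u Hm').
      rewrite <- pascal by lia.
      assert (Hsym : C m (S u) = C m u).
      { rewrite pascal_step1 by lia. f_equal. lia. }
      destruct u as [|v].
      * rewrite !C_n_0 in *. lra.
      * rewrite <- pascal by lia. lra.
    + rewrite NN_S, plus_INR. destruct u as [|u].
      * rewrite NN_zero by lia. specialize (IH h' 0%nat ltac:(lia)). rewrite !C_n_0 in *. simpl INR. lra.
      * pose proof (IH (S (S h')) u ltac:(lia)) as IH1.
        pose proof (IH h' (S u) ltac:(lia)) as IH2.
        rewrite <- pascal by lia.
        destruct u as [|v].
        -- rewrite !C_n_0 in *. lra.
        -- rewrite <- pascal by lia. lra.
Qed.

Ltac fnz := repeat match goal with |- context [INR (fact ?n)] =>
  let H := fresh in assert (H := INR_fact_neq_0 n); revert H; generalize (INR (fact n)) end; intros.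

Lemma L1 : forall k, C (2 * S k) k * (INR k + 2) = C (2 * S k) (S k) * (INR k + 1).
Proof.
  intros k. unfold C.
  replace (2 * S k - k)%nat with (S (S k)) by lia. replace (2 * S k - S k)%nat with (S k) by lia.
  rewrite (fact_simpl (S k)), (fact_simpl k). rewrite !mult_INR, !S_INR.
  pose proof (pos_INR k). pose proof (INR_fact_neq_0 k). pose proof (INR_fact_neq_0 (2 * S k)).
  field. repeat split; lra.
Qed.

Lemma L2 : forall k, C (2 * S k) (S k) * (INR k + 1) = C (2 * k) k * (2 * (2 * INR k + 1)).
Proof.
  intros k. unfold C.
  replace (2 * S k - S k)%nat with (S k) by lia. replace (2 * k - k)%nat with k by lia.
  replace (2 * S k)%nat with (S (S (2 * k))) by lia.
  rewrite (fact_simpl (S (2 * k))), (fact_simpl (2 * k)), (fact_simpl k). rewrite !mult_INR, !S_INR, !mult_INR.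
  pose proof (pos_INR k). pose proof (INR_fact_neq_0 k). pose proof (INR_fact_neq_0 (2 * k)).
  simpl (INR 2). field. repeat split; lra.
Qed.

Lemma L3 : forall k, C (2 * S (S k) - 1) k * (2 * (INR k + 3)) = C (2 * S (S k)) (S (S k)) * (INR k + 1).
Proof.
  intros k. unfold C.
  replace (2 * S (S k) - 1 - k)%nat with (S (S (S k))) by lia.
  replace (2 * S (S k) - S (S k))%nat with (S (S k)) by lia.
  replace (2 * S (S k) - 1)%nat with (S (S (S (2 * k)))) by lia.
  replace (2 * S (S k))%nat with (S (S (S (S (2 * k))))) by lia.
  rewrite (fact_simpl (S (S (S (2 * k))))).
  rewrite (fact_simpl (S (S k))), (fact_simpl (S k)), (fact_simpl k). rewrite !mult_INR, !S_INR, !mult_INR.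
  pose proof (pos_INR k). pose proof (INR_fact_neq_0 k). pose proof (INR_fact_neq_0 (S (S (S (2 * k))))).
  simpl (INR 2). field. repeat split; lra.
Qed.

Definition Cat (n : nat) : R := C (2 * n) n / (INR n + 1).

Lemma NN_Cat : forall n, INR (NN 0 (2 * n)) = Cat n.
Proof.
  intros [|k]. unfold Cat. change (2 * 0)%nat with 0%nat. rewrite NN_0, C_n_0. simpl. lra.
  pose proof (Nballot (2 * S k) 0 (S k) ltac:(lia)) as H. unfold Cat.
  pose proof (L1 k). rewrite S_INR. pose proof (pos_INR k).
  apply (Rmult_eq_reg_r (INR k + 1 + 1)); [|lra]. field_simplify; [|lra].
  apply (Rmult_eq_reg_r (INR k + 2)); [|lra]. nra.
Qed.

Lemma C_pos : forall n k, 0 < C n k.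
Proof.
  intros n k. unfold C. apply Rdiv_lt_0_compat. apply INR_fact_lt_0.
  apply Rmult_lt_0_compat; apply INR_fact_lt_0.
Qed.

Lemma ell_R : forall m, INR (ell_dyck (S m)) = C (2 * S m) (S m) * INR m / (2 * (INR m + 2)).
Proof.
  intros m. pose proof (ell_formula (S m) ltac:(lia)) as H.
  replace (2 * S m - 2)%nat with (2 * m)%nat in H by lia.
  apply (f_equal INR) in H. rewrite plus_INR, mult_INR, !NN_Cat in H.
  replace (INR (2 * S m - 1)) with (2 * INR m + 1) in H
    by (replace (2 * S m - 1)%nat with (S (2 * m)) by lia; rewrite S_INR, mult_INR; simpl; lra).
  unfold Cat in H. rewrite S_INR in H. pose proof (L2 m). pose proof (pos_INR m).
  assert (E : INR (ell_dyck (S m)) = (2 * INR m + 1) * (C (2 * m) m / (INR m + 1)) - C (2 * S m) (S m) / (INR m + 1 + 1)) by lra.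
  rewrite E. replace (C (2 * m) m) with (C (2 * S m) (S m) * (INR m + 1) / (2 * (2 * INR m + 1))).
  field. lra. rewrite H0. field. lra.
Qed.

Lemma part2 : forall n : nat, (2 <= n)%nat ->
     INR (ell_dyck n) = / 2 * C (2 * n) n * (INR n - 1) / (INR n + 1) /\
     INR (ell_dyck n) = C (2 * n - 1) (n - 2).
Proof.
  intros n Hn. destruct n as [|[|k]]; try lia.
  rewrite ell_R. rewrite !S_INR. pose proof (pos_INR k). pose proof (L3 k). split.
  - field. lra.
  - replace (S (S k) - 2)%nat with k by lia.
    apply (Rmult_eq_reg_r (2 * (INR k + 3))); [|lra]. rewrite H0. field. lra.
Qed.

Lemma part3 : forall n : nat, (1 <= n)%nat -> hasse_index_dyck n = (INR n - 1) / 2.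
Proof.
  intros n Hn. destruct n as [|m]; try lia. unfold hasse_index_dyck.
  change (length (dyck (S m))) with (NN 0 (2 * S m)). rewrite NN_Cat, ell_R. unfold Cat.
  pose proof (C_pos (2 * S m) (S m)). rewrite !S_INR. pose proof (pos_INR m). field. lra.
Qed.

Lemma part4 : Un_cv (fun n => hasse_index_dyck n / (INR n / 2)) 1.
Proof.
  intros eps Heps. destruct (archimed (/ eps)) as [H1 _].
  destruct (INR_unbounded (/ eps)) as [N0 HN0].
  exists (S N0). intros n Hn. unfold R_dist. rewrite part3 by lia.
  assert (Hn' : INR n > INR N0) by (apply lt_INR; lia).
  assert (Hpos : 0 < INR n) by (pose proof (pos_INR N0); lra).
  replace ((INR n - 1) / 2 / (INR n / 2) - 1) with (- / INR n) by (field; lra).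
  rewrite Rabs_Ropp, Rabs_right by (left; apply Rinv_0_lt_compat; lra).
  apply (Rmult_lt_reg_r (INR n)); [lra|]. rewrite Rinv_l by lra.
  apply (Rmult_lt_reg_l (/ eps)). apply Rinv_0_lt_compat; lra.
  rewrite <- Rmult_assoc, Rinv_l by lra. lra.
Qed.
From Coquelicot Require Import Rcomplements Rbar Hierarchy Lim_seq Series PSeries Derive AutoDerive.

Definition ca (n : nat) : R := C (2 * n) n.

Lemma ca_rec : forall n, ca (S n) * (INR n + 1) = ca n * (2 * (2 * INR n + 1)).
Proof. intros n. unfold ca. apply L2. Qed.

Lemma ca_0 : ca 0 = 1.
Proof. unfold ca. apply C_n_0. Qed.

Lemma ca_bound : forall n, 0 < ca n <= 4 ^ n.
Proof.
  induction n as [|n IH]. rewrite ca_0. simpl. lra.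
  pose proof (ca_rec n) as Hr. pose proof (pos_INR n). split. apply C_pos.
  simpl. assert (ca (S n) = ca n * (2 * (2 * INR n + 1)) / (INR n + 1)) as -> by (rewrite <- Hr; field; lra).
  apply (Rmult_le_reg_r (INR n + 1)); [lra|]. field_simplify; [|lra]. nra.
Qed.

Lemma ca_radius : Rbar_le (Finite (/ 4)) (CV_radius ca).
Proof.
  apply (proj1 (CV_radius_bounded ca)). exists 1. intros n.
  destruct (ca_bound n) as [H1 H2]. rewrite <- Rinv_pow by lra.
  rewrite Rabs_right. apply (Rmult_le_reg_r (4 ^ n)). apply pow_lt; lra.
  rewrite Rmult_assoc, Rinv_l, Rmult_1_r, Rmult_1_l. auto. apply pow_nonzero; lra.
  apply Rle_ge, Rmult_le_pos; [lra|]. left; apply Rinv_0_lt_compat, pow_lt; lra.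
Qed.

Lemma ca_inside : forall x, Rabs x < / 4 -> Rbar_lt (Finite (Rabs x)) (CV_radius ca).
Proof.
  intros x Hx. pose proof ca_radius. destruct (CV_radius ca) as [r| |]; simpl in *; auto; lra.
Qed.

Lemma dn : forall n, PS_derive ca n = ca n * (2 * (2 * INR n + 1)).
Proof. intros n. unfold PS_derive. rewrite S_INR, Rmult_comm. apply ca_rec. Qed.

Lemma coef : forall n, PS_scal 2 ca n = PS_minus (PS_derive ca) (PS_scal 4 (PS_incr_1 (PS_derive ca))) n.
Proof.
  intros n. unfold PS_minus, PS_scal, PS_incr_1. simpl. unfold plus, opp, scal, mult; simpl.
  unfold plus, opp, scal, mult; simpl.
  destruct n as [|k].
  - rewrite dn. simpl. unfold zero. simpl. ring.
  - rewrite !dn. pose proof (ca_rec k). rewrite S_INR. lra.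
Qed.

Lemma f_ode : forall x, Rabs x < / 4 ->
  (1 - 4 * x) * PSeries (PS_derive ca) x = 2 * PSeries ca x.
Proof.
  intros x Hx. pose proof (ex_pseries_derive ca x (ca_inside x Hx)) as Hd.
  rewrite <- (PSeries_scal 2 ca x). rewrite (PSeries_ext _ _ x coef).
  rewrite PSeries_minus; auto.
  rewrite PSeries_scal, PSeries_incr_1. ring.
  apply ex_pseries_scal. apply Rmult_comm. apply ex_pseries_incr_1. auto.
Qed.

Lemma sq_deriv : forall x, x < / 4 -> is_derive (fun y => sqrt (1 - 4 * y)) x (-2 / sqrt (1 - 4 * x)).
Proof.
  intros x Hx. auto_derive. lra.
  replace (1 + - (4 * x)) with (1 - 4 * x) by ring.
  assert (0 < sqrt (1 - 4 * x)) by (apply sqrt_lt_R0; lra). field. lra.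
Qed.

Lemma g_deriv : forall x, Rabs x < / 4 -> is_derive (fun y => PSeries ca y * sqrt (1 - 4 * y)) x 0.
Proof.
  intros x Hx. assert (Hx' : x < / 4) by (apply Rabs_def2 in Hx; lra).
  pose proof (is_derive_mult _ _ _ _ _ (is_derive_PSeries ca x (ca_inside x Hx)) (sq_deriv x Hx')) as H.
  replace 0 with (PSeries (PS_derive ca) x * sqrt (1 - 4 * x) + PSeries ca x * (-2 / sqrt (1 - 4 * x))).
  exact H.
  pose proof (f_ode x Hx) as E.
  assert (Hs : 0 < sqrt (1 - 4 * x)) by (apply sqrt_lt_R0; lra).
  pose proof (sqrt_sqrt (1 - 4 * x) ltac:(lra)) as Hss.
  apply (Rmult_eq_reg_r (sqrt (1 - 4 * x))); [|lra].
  field_simplify; [|lra]. rewrite <- Rsqr_pow2. unfold Rsqr. rewrite Hss. lra.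
Qed.

Lemma f_closed : forall x, Rabs x < / 4 -> PSeries ca x * sqrt (1 - 4 * x) = 1.
Proof.
  intros x Hx. apply Rabs_def2 in Hx as [Hx1 Hx2].
  assert (G0 : PSeries ca 0 * sqrt (1 - 4 * 0) = 1).
  { rewrite PSeries_0, ca_0. replace (1 - 4 * 0) with 1 by ring. rewrite sqrt_1. ring. }
  destruct (Rtotal_order x 0) as [Hlt|[->|Hgt]]; auto.
  - transitivity (PSeries ca 0 * sqrt (1 - 4 * 0)); [|exact G0]. apply (eq_is_derive (fun y => PSeries ca y * sqrt (1 - 4 * y))); auto.
    intros t Ht. apply g_deriv. apply Rabs_def1; lra.
  - transitivity (PSeries ca 0 * sqrt (1 - 4 * 0)); [|exact G0]. symmetry. apply (eq_is_derive (fun y => PSeries ca y * sqrt (1 - 4 * y))); auto.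
    intros t Ht. apply g_deriv. apply Rabs_def1; lra.
Qed.

Lemma is_series_lin : forall (a b : nat -> R) la lb p q,
  is_series a la -> is_series b lb -> is_series (fun n => p * a n + q * b n) (p * la + q * lb).
Proof.
  intros a b la lb p q Ha Hb.
  exact (is_series_plus _ _ _ _ (is_series_scal p _ _ Ha) (is_series_scal q _ _ Hb)).
Qed.

Lemma ca_series : forall x, Rabs x < / 4 -> is_series (fun n => ca n * x ^ n) (/ sqrt (1 - 4 * x)).
Proof.
  intros x Hx. pose proof (f_closed x Hx) as Hf.
  assert (Hs : 0 < sqrt (1 - 4 * x)) by (apply sqrt_lt_R0; apply Rabs_def2 in Hx; lra).
  replace (/ sqrt (1 - 4 * x)) with (PSeries ca x) by (apply (Rmult_eq_reg_r (sqrt (1 - 4 * x))); [rewrite Hf; field|]; lra).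
  pose proof (PSeries_correct ca x (CV_radius_inside ca x (ca_inside x Hx))) as H.
  unfold is_pseries in H. apply (is_series_ext _ _ _ (fun n => eq_trans (f_equal (fun z => z) eq_refl) eq_refl)) in H.
  eapply is_series_ext; [|exact H]. intros n. simpl. rewrite pow_n_pow. unfold scal; simpl. unfold mult; simpl. ring.
Qed.

Lemma ell0 : ell_dyck 0 = 0%nat.
Proof. vm_compute. reflexivity. Qed.

Lemma ca1 : ca 1 = 2.
Proof. pose proof (ca_rec 0) as H. rewrite ca_0 in H. simpl in H. lra. Qed.

Lemma part1 : forall x : R, 0 < Rabs x < / 4 ->
     infinite_sum (fun n => INR (ell_dyck n) * x ^ n)
       ((1 - 3 * x - (1 - x) * sqrt (1 - 4 * x)) / (2 * x * sqrt (1 - 4 * x))).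
Proof.
  intros x [Hx0 Hx]. apply is_series_Reals.
  assert (Hxn : x <> 0) by (intros ->; rewrite Rabs_R0 in Hx0; lra).
  assert (Hs : 0 < sqrt (1 - 4 * x)) by (apply sqrt_lt_R0; apply Rabs_def2 in Hx; lra).
  set (F := / sqrt (1 - 4 * x)).
  pose proof (ca_series x Hx) as H0. fold F in H0.
  assert (H1 : is_series (fun n => ca (S n) * x ^ (S n)) (F - 1)).
  { apply (is_series_incr_1 (fun n => ca n * x ^ n)). cbv beta.
    assert (E : F = (F - 1) + ca 0 * x ^ 0) by (rewrite ca_0; simpl; ring).
    rewrite E in H0. exact H0. }
  assert (H2 : is_series (fun n => ca (S (S n)) * x ^ (S (S n))) (F - 1 - 2 * x)).
  { apply (is_series_incr_1 (fun n => ca (S n) * x ^ (S n))). cbv beta.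
    assert (E : F - 1 = (F - 1 - 2 * x) + ca 1 * x ^ 1) by (rewrite ca1; simpl; ring).
    rewrite E in H1. exact H1. }
  pose proof (is_series_lin _ _ _ _ (/ (2 * x)) (- 3 / 2) H2 H1) as H3.
  assert (H4 : is_series (fun n => INR (ell_dyck (S n)) * x ^ (S n)) (/ (2 * x) * (F - 1 - 2 * x) + -3 / 2 * (F - 1))).
  { eapply is_series_ext; [|exact H3]. intros n. simpl.
    rewrite ell_R. pose proof (ca_rec (S n)) as R1. rewrite S_INR in R1. fold (ca (S n)).
    pose proof (pos_INR n).
    assert (E : ca (S (S n)) = ca (S n) * (2 * (2 * (INR n + 1) + 1)) / (INR n + 1 + 1)) by (rewrite <- R1; field; lra).
    rewrite E. field. lra. }
  apply (is_series_decr_1 (fun n => INR (ell_dyck n) * x ^ n)).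
  assert (E : / (2 * x) * (F - 1 - 2 * x) + -3 / 2 * (F - 1) =
     (1 - 3 * x - (1 - x) * sqrt (1 - 4 * x)) / (2 * x * sqrt (1 - 4 * x)) + - (INR (ell_dyck 0) * x ^ 0)).
  { rewrite ell0. unfold F. simpl. field. lra. }
  rewrite E in H4. exact H4.
Qed.

Theorem mainTheorem3 :
  (forall x : R, 0 < Rabs x < / 4 ->
     infinite_sum (fun n => INR (ell_dyck n) * x ^ n)
       ((1 - 3 * x - (1 - x) * sqrt (1 - 4 * x)) / (2 * x * sqrt (1 - 4 * x)))) /\
  (forall n : nat, (2 <= n)%nat ->
     INR (ell_dyck n) = / 2 * C (2 * n) n * (INR n - 1) / (INR n + 1) /\
     INR (ell_dyck n) = C (2 * n - 1) (n - 2)) /\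
  (forall n : nat, (1 <= n)%nat -> hasse_index_dyck n = (INR n - 1) / 2) /\
  Un_cv (fun n => hasse_index_dyck n / (INR n / 2)) 1.
Proof.
  split; [exact part1|split; [exact part2|split; [exact part3|exact part4]]].
Qed.
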